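(* Let $(X_n,\|\cdot\|_n)_{n\ge1}$ be a sequence of Banach spaces, let $Z=(\sum_{n=1}^\infty\oplus X_n)_1$ and let $X$ be the Banach space defined in the context (both identified with spaces of sequences $(x_n)$, $x_n\in X_n$). Then $(X_n)_{n\ge1}$ is a monotone Schauder decomposition of each of the spaces $X$ and $Z$, and it is moreover a $1$-unconditional decomposition of $X$ and of $Z$. In particular, for every $x=(x_1,x_2,\dots)\in c_{00}((X_n))$, every $(\varepsilon_i)\in\{-1,1\}^{\mathbb{N}}$ and every $m\in\mathbb{N}$, $$\|(\varepsilon_1x_1,\dots,\varepsilon_mx_m)\|=\|(x_1,\dots,x_m)\|\le\|(x_1,\dots,x_{m+1})\|$$ and the same holds with $\|\cdot\|$ replaced by the norm $\|\cdot\|_Z$ of $Z$.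
   Context: $c_{00}((X_n))$ is the vector space of sequences $(x_1,x_2,\dots)$ with $x_k\in X_k$ and only finitely many $x_k\ne0$; $(x_1,\dots,x_n)$ denotes $(x_1,\dots,x_n,0,0,\dots)$. On $c_{00}((X_n))$ define inductively $\|(x_1)\|=\|x_1\|_1$ (the norm of $X_1$) and, for $n\ge2$, $$\|(x_1,\dots,x_n)\|=\Big(1-\tfrac{1}{n+1}\Big)\big(\|x_n\|_n+\|(x_1,\dots,x_{n-1})\|\big)+\tfrac{1}{n+1}\max\Big\{\tfrac{\|x_n\|_n}{n},\ \|(x_1,\dots,x_{n-1})\|\Big\}.$$ $X$ is the completion of $(c_{00}((X_n)),\|\cdot\|)$; since this norm satisfies $\frac12\sum\|x_n\|_n\le\|(x_n)\|\le\sum\|x_n\|_n$, $X$ is identified with the space of sequences $(x_n)$, $x_n\in X_n$, $\sum_n\|x_n\|_n<\infty$. $Z=(\sum\oplus X_n)_1$ has norm $\|(x_n)\|_Z=\sum_n\|x_n\|_n$. A sequence of closed subspaces $(X_n)$ is a Schauder decomposition of a Banach space $W$ if every $w\in W$ has a unique norm-convergent expansion $w=\sum_n w_n$ with $w_n\in X_n$; it is monotone if the partial sum projections $P_m w=\sum_{n\le m}w_n$ satisfy $\|P_m w\|\le\|P_{m+1}w\|$ (hence $\|P_m\|\le1$); it is $1$-unconditional if $\|\sum_n\varepsilon_nw_n\|=\|\sum_n w_n\|$ for all signs $\varepsilon_n\in\{-1,1\}$. *)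

(* Defs.v *)
From HB Require Import structures.
From mathcomp Require Import all_boot all_order all_algebra.
From mathcomp Require Import all_classical all_reals all_analysis.
Set Implicit Arguments. Unset Strict Implicit. Unset Printing Implicit Defensive.
Import Order.TTheory GRing.Theory Num.Theory.
Import numFieldNormedType.Exports.
Local Open Scope classical_set_scope.
Local Open Scope ring_scope.

(* INDEXING CONVENTION: the paper's spaces X_1, X_2, ... are the family
   [Xs 0, Xs 1, ...] (0-based: Xs k plays the role of X_{k+1}). *)

Section Defs.
Variables (R : realType) (Xs : nat -> normedModType R).

Definition seqs := forall k : nat, Xs k.

(* Nrec x k = ||(x_1, ..., x_{k+1})|| of the paper (inductive definition),
   with paper index n = k.+1 *)
Fixpoint Nrec (x : seqs) (k : nat) : R :=
  match k with
  | 0 => `|x 0%N|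
  | k'.+1 =>
      let n : R := k'.+2%:R in
      (1 - 1 / (n + 1)) * (`|x k'.+1| + Nrec x k')
      + 1 / (n + 1) * Num.max (`|x k'.+1| / n) (Nrec x k')
  end.

Definition Zrec (x : seqs) (k : nat) : R := \sum_(i < k.+1) `|x i|.

(* the sequences in X (equivalently Z): sum_n ||x_n|| < oo *)
Definition summable (x : seqs) : Prop := cvg (Zrec x @ \oo).

(* Norms on the completions, identified with sequence spaces: the norm of
   w is the limit of the norms of its truncations (continuous extension). *)
Definition Xnorm (x : seqs) : R := limn (Nrec x).
Definition Znorm (x : seqs) : R := limn (Zrec x).

(* partial sum projection P_m (paper's P_{m+1}): keep x_0..x_m *)
Definition trunc (m : nat) (x : seqs) : seqs :=
  fun k => if (k <= m)%N then x k else 0.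

Definition sub_seq (x y : seqs) : seqs := fun k => x k - y k.
Definition sign_seq (e : nat -> R) (x : seqs) : seqs := fun k => e k *: x k.

(* Elements of X_n are
   embedded as sequences supported at n; the partial sums of sum_n e_n(v_n)
   are [trunc m v]. *)
Definition schauder_decomposition (nrm : seqs -> R) : Prop :=
  forall w : seqs, summable w ->
    ((fun m => nrm (sub_seq w (trunc m w))) @ \oo --> 0) /\
    (forall v : seqs,
        (fun m => nrm (sub_seq w (trunc m v))) @ \oo --> 0 -> v = w).

Definition monotone_decomposition (nrm : seqs -> R) : Prop :=
  forall w : seqs, summable w ->
    forall m, nrm (trunc m w) <= nrm (trunc m.+1 w).

Definition unconditional1_decomposition (nrm : seqs -> R) : Prop :=
  forall (w : seqs) (e : nat -> R), summable w ->
    (forall k, e k = 1 \/ e k = -1) ->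
    summable (sign_seq e w) /\ nrm (sign_seq e w) = nrm w.

End Defs.

(* Main.v *)
Set Warnings "-all".
Require Import Defs.
From HB Require Import structures.
From mathcomp Require Import all_boot all_order all_algebra.
From mathcomp Require Import all_classical all_reals all_analysis.
From mathcomp Require Import ring lra.
Set Implicit Arguments. Unset Strict Implicit. Unset Printing Implicit Defensive.
Import Order.TTheory GRing.Theory Num.Theory.
Import numFieldNormedType.Exports.
Local Open Scope classical_set_scope.
Local Open Scope ring_scope.
Section Aux.
Variables (R : realType) (Xs : nat -> normedModType R).
Local Notation S := (seqs Xs).

Lemma Nrec_ext (x y : S) k :
  (forall i, (i <= k)%N -> `|x i| = `|y i|) -> Nrec x k = Nrec y k.
Proof.
elim: k => [|k IH] H /=; first by rewrite H.
rewrite IH ?H // => i hi; apply: H; exact: leqW.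
Qed.

Lemma Nrec_ge0 (x : S) k : 0 <= Nrec x k.
Proof.
elim: k => [|k IH] /=; first exact: normr_ge0.
set n : R := k.+2%:R.
have n1 : 1 <= n by rewrite /n ler1n.
have t0 : 0 < 1 / (n + 1) by rewrite divr_gt0 // ltr_wpDl // ler0n.
have t1 : 1 / (n + 1) <= 1 by rewrite ler_pdivrMr ?mul1r ?ltr_wpDl ?ler0n // lerDr.
apply: addr_ge0; apply: mulr_ge0.
- by rewrite subr_ge0.
- by rewrite addr_ge0.
- exact: ltW.
- by rewrite le_max IH orbT.
Qed.

Lemma Nrec_mono1 (x : S) k : Nrec x k <= Nrec x k.+1.
Proof.
rewrite /=.
set n : R := k.+2%:R; set b := Nrec x k; set a := `|x k.+1|.
set t := 1 / (n + 1); set M := Num.max _ _.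
have n1 : 1 <= n by rewrite /n ler1n.
have t0 : 0 < t by rewrite divr_gt0 // ltr_wpDl // ler0n.
have t1 : t <= 1 by rewrite /t ler_pdivrMr ?mul1r ?ltr_wpDl ?ler0n // lerDr.
have a0 : 0 <= a by exact: normr_ge0.
have bM : b <= M by rewrite le_max lexx orbT.
have h1 : t * b <= t * M by rewrite ler_wpM2l // ltW.
have h2 : 0 <= (1 - t) * a by rewrite mulr_ge0 // subr_ge0.
have -> : (1 - t) * (a + b) + t * M = (1 - t) * a + (b + (t * M - t * b)) by ring.
lra.
Qed.

Lemma Nrec_le_Zrec (x : S) k : Nrec x k <= Zrec x k.
Proof.
elim: k => [|k IH]; first by rewrite /Zrec big_ord1.
rewrite /Zrec big_ord_recr /= -/(Zrec x k).
set n : R := k.+2%:R; set b := Nrec x k; set a := `|x k.+1|.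
set t := 1 / (n + 1); set M := Num.max _ _.
have n1 : 1 <= n by rewrite /n ler1n.
have t0 : 0 < t by rewrite divr_gt0 // ltr_wpDl // ler0n.
have a0 : 0 <= a by exact: normr_ge0.
have b0 : 0 <= b by exact: Nrec_ge0.
have an : a / n <= a by rewrite ler_pdivrMr ?(lt_le_trans ltr01) // ler_peMr.
have Mab : M <= a + b.
  rewrite /M ge_max; apply/andP; split; last by lra.
  apply: le_trans an _; lra.
have h1 : t * M <= t * (a + b) by rewrite ler_wpM2l // ltW.
have IH' : b <= Zrec x k := IH.
have -> : (1 - t) * (a + b) + t * M = (a + b) + (t * M - t * (a + b)) by ring.
lra.
Qed.

End Aux.
Section Aux2.
Variables (R : realType) (Xs : nat -> normedModType R).
Local Notation S := (seqs Xs).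

Lemma Nrec_mono (x : S) : {homo Nrec x : i j / (i <= j)%N >-> i <= j}.
Proof. apply: homo_leq => //; [exact: le_trans | exact: Nrec_mono1]. Qed.

Lemma Nrec_half (x : S) j : `|x j| <= 2 * Nrec x j.
Proof.
case: j => [|k] /=; first by have := normr_ge0 (x 0%N); lra.
set n : R := k.+2%:R; set b := Nrec x k; set a := `|x k.+1|.
set t := 1 / (n + 1); set M := Num.max _ _.
have n1 : 1 <= n by rewrite /n ler1n.
have t0 : 0 < t by rewrite divr_gt0 // ltr_wpDl // ler0n.
have th : t <= 1 / 2 by rewrite /t ler_pdivrMr ?ltr_wpDl ?ler0n // mulrC mulrA mulr1 ler_pdivlMr // mul1r; lra.
have a0 : 0 <= a by exact: normr_ge0.
have b0 : 0 <= b by exact: Nrec_ge0.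
have M0 : 0 <= M by rewrite /M le_max b0 orbT.
have h1 : t * a <= 1 / 2 * a by rewrite ler_wpM2r.
have h2 : 0 <= t * M by rewrite mulr_ge0 // ltW.
have h3 : 0 <= (1 - t) * b by rewrite mulr_ge0 // subr_ge0; lra.
have -> : (1 - t) * (a + b) + t * M = a - t * a + ((1 - t) * b + t * M) by ring.
lra.
Qed.

Lemma Zrec_ext (x y : S) k :
  (forall i, (i <= k)%N -> `|x i| = `|y i|) -> Zrec x k = Zrec y k.
Proof. by move=> H; apply: eq_bigr => i _; apply: H; rewrite -ltnS. Qed.

Lemma Zrec_S (x : S) k : Zrec x k.+1 = Zrec x k + `|x k.+1|.
Proof. by rewrite /Zrec big_ord_recr. Qed.

Lemma Zrec_ge0 (x : S) k : 0 <= Zrec x k.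
Proof. by apply: sumr_ge0 => i _; exact: normr_ge0. Qed.

Lemma Zrec_mono1 (x : S) k : Zrec x k <= Zrec x k.+1.
Proof. by rewrite Zrec_S lerDl normr_ge0. Qed.

Lemma Zrec_mono (x : S) : {homo Zrec x : i j / (i <= j)%N >-> i <= j}.
Proof. apply: homo_leq => //; [exact: le_trans | exact: Zrec_mono1]. Qed.

Lemma Zrec_ge (x : S) j : `|x j| <= Zrec x j.
Proof.
case: j => [|k]; first by rewrite /Zrec big_ord1.
by rewrite Zrec_S lerDr Zrec_ge0.
Qed.

Lemma Nrec_cst (w : S) m k : Nrec (trunc m w) (k + m) = Nrec w m.
Proof.
elim: k => [|k IH].
  by rewrite add0n; apply: Nrec_ext => i hi; rewrite /trunc hi.
rewrite addSn /= IH /trunc.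
have -> : ((k + m).+1 <= m)%N = false by apply/negbTE; rewrite -ltnNge ltnS leq_addl.
rewrite normr0 mul0r add0r.
have -> : Num.max 0 (Nrec w m) = Nrec w m by apply/max_idPr; exact: Nrec_ge0.
by rewrite -mulrDl subrK mul1r.
Qed.

Lemma Zrec_cst (w : S) m k : Zrec (trunc m w) (k + m) = Zrec w m.
Proof.
elim: k => [|k IH].
  by rewrite add0n; apply: Zrec_ext => i hi; rewrite /trunc hi.
rewrite addSn Zrec_S IH /trunc.
have -> : ((k + m).+1 <= m)%N = false by apply/negbTE; rewrite -ltnNge ltnS leq_addl.
by rewrite normr0 addr0.
Qed.

Lemma Xnorm_trunc (w : S) m : Xnorm (trunc m w) = Nrec w m.
Proof.
rewrite /Xnorm; apply: cvg_lim => //; apply: cvg_near_cst.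
by exists m => // k /= hk; rewrite -(subnK hk) Nrec_cst.
Qed.

Lemma Znorm_trunc (w : S) m : Znorm (trunc m w) = Zrec w m.
Proof.
rewrite /Znorm; apply: cvg_lim => //; apply: cvg_near_cst.
by exists m => // k /= hk; rewrite -(subnK hk) Zrec_cst.
Qed.

End Aux2.
Section Aux3.
Variables (R : realType) (Xs : nat -> normedModType R).
Local Notation S := (seqs Xs).

Lemma summP (x : S) : Defs.summable x <-> exists M, forall k, Zrec x k <= M.
Proof.
split.
  by move=> hx; exists (Znorm x) => k; exact: (nondecreasing_cvgn_le (Zrec_mono x) hx k).
case=> M hM; apply: (nondecreasing_is_cvgn (Zrec_mono x)).
by exists M => _ [k _ <-]; exact: hM.
Qed.

Lemma Zrec_le_Znorm (x : S) : Defs.summable x -> forall k, Zrec x k <= Znorm x.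
Proof. by move=> hx k; exact: (nondecreasing_cvgn_le (Zrec_mono x) hx k). Qed.

Lemma Nrec_cvg (x : S) : Defs.summable x -> cvgn (Nrec x).
Proof.
move=> hx; apply: (nondecreasing_is_cvgn (Nrec_mono x)).
exists (Znorm x) => _ [k _ <-].
exact: le_trans (Nrec_le_Zrec x k) (Zrec_le_Znorm hx k).
Qed.

Lemma Nrec_le_Xnorm (x : S) : Defs.summable x -> forall k, Nrec x k <= Xnorm x.
Proof. by move=> hx k; exact: (nondecreasing_cvgn_le (Nrec_mono x) (Nrec_cvg hx) k). Qed.

Lemma Xnorm_le_Znorm (x : S) : Defs.summable x -> Xnorm x <= Znorm x.
Proof.
move=> hx; apply: limr_le; first exact: Nrec_cvg.
exists 0%N => // k _ /=.
exact: le_trans (Nrec_le_Zrec x k) (Zrec_le_Znorm hx k).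
Qed.

Lemma Xnorm_ge0 (x : S) : Defs.summable x -> 0 <= Xnorm x.
Proof. by move=> hx; exact: le_trans (Nrec_ge0 x 0) (Nrec_le_Xnorm hx 0). Qed.

Lemma Znorm_ge0 (x : S) : Defs.summable x -> 0 <= Znorm x.
Proof. by move=> hx; exact: le_trans (Zrec_ge0 x 0) (Zrec_le_Znorm hx 0). Qed.

Lemma Xnorm_half (x : S) j : Defs.summable x -> `|x j| / 2 <= Xnorm x.
Proof.
move=> hx; have h1 := Nrec_half x j; have h2 := Nrec_le_Xnorm hx j; lra.
Qed.

Lemma Znorm_half (x : S) j : Defs.summable x -> `|x j| / 2 <= Znorm x.
Proof.
move=> hx; have h1 := Zrec_ge x j; have h2 := Zrec_le_Znorm hx j.
have h0 := normr_ge0 (x j); lra.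
Qed.

Lemma summ_sub (w v : S) m : Defs.summable w -> Defs.summable (sub_seq w (trunc m v)).
Proof.
move=> /summP [M hM]; apply/summP; exists (M + Zrec v m) => k.
have h1 : Zrec (sub_seq w (trunc m v)) k <= Zrec w k + Zrec (trunc m v) k.
  rewrite /Zrec -big_split /=; apply: ler_sum => i _; exact: ler_normB.
have h2 : Zrec (trunc m v) k <= Zrec v m.
  by rewrite -(Zrec_cst v m k); apply: Zrec_mono; exact: leq_addr.
have h3 := hM k; lra.
Qed.

Lemma tail_eq (w : S) m k :
  Zrec (sub_seq w (trunc m w)) k + Zrec w m = Zrec w (maxn k m).
Proof.
elim: k => [|k IH].
  by rewrite /Zrec big_ord1 /sub_seq /trunc /= subrr normr0 add0r max0n.
rewrite Zrec_S.
case: (leqP k.+1 m) => hk.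
  have -> : sub_seq w (trunc m w) k.+1 = 0 by rewrite /sub_seq /trunc hk subrr.
  by rewrite normr0 addr0 IH (maxn_idPr (ltnW hk)).
have -> : sub_seq w (trunc m w) k.+1 = w k.+1.
  by rewrite /sub_seq /trunc leqNgt hk subr0.
have hk' : (m <= k)%N by rewrite -ltnS.
rewrite (maxn_idPl hk') in IH.
rewrite Zrec_S; lra.
Qed.

Lemma Znorm_tail (w : S) m : Defs.summable w ->
  Znorm (sub_seq w (trunc m w)) <= Znorm w - Zrec w m.
Proof.
move=> hw; apply: limr_le; first exact: summ_sub.
exists 0%N => // k _ /=.
have := tail_eq w m k; have := Zrec_le_Znorm hw (maxn k m); lra.
Qed.

End Aux3.
Section Aux4.
Variables (R : realType) (Xs : nat -> normedModType R).
Local Notation S := (seqs Xs).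

Lemma uniq_gen (nrm : S -> R)
  (hh : forall (y : S) j, Defs.summable y -> `|y j| / 2 <= nrm y) (w v : S) :
  Defs.summable w ->
  (fun m => nrm (sub_seq w (trunc m v))) @ \oo --> 0 -> v = w.
Proof.
move=> hw H; apply: functional_extensionality_dep => j.
apply/eqP; rewrite eq_sym -subr_eq0 -normr_le0.
have : `|w j - v j| / 2 <= 0.
  rewrite -(cvg_lim _ H) //; apply: limr_ge; first by apply/cvg_ex; exists 0.
  exists j => // m /= hm.
  by have := hh _ j (summ_sub (v:=v) (m:=m) hw); rewrite /sub_seq /trunc hm.
have := normr_ge0 (w j - v j); lra.
Qed.

Lemma Znorm_tail_cvg (w : S) : Defs.summable w ->
  (fun m => Znorm (sub_seq w (trunc m w))) @ \oo --> 0.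
Proof.
move=> hw.
apply: (@squeeze_cvgr _ _ _ _ (fun=> 0) (fun m => Znorm w - Zrec w m)).
- exists 0%N => // m _ /=; rewrite Znorm_tail // andbT; exact: Znorm_ge0 (summ_sub (v:=w) (m:=m) hw).
- exact: cvg_cst.
- by rewrite -(subrr (Znorm w)); apply: cvgB => //; exact: cvg_cst.
Qed.

Lemma Xnorm_tail_cvg (w : S) : Defs.summable w ->
  (fun m => Xnorm (sub_seq w (trunc m w))) @ \oo --> 0.
Proof.
move=> hw.
apply: (@squeeze_cvgr _ _ _ _ (fun=> 0) (fun m => Znorm (sub_seq w (trunc m w)))).
- exists 0%N => // m _ /=; rewrite Xnorm_ge0 ?Xnorm_le_Znorm //; exact: summ_sub.
- exact: cvg_cst.
- exact: Znorm_tail_cvg.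
Qed.

Lemma norm_sign (e : nat -> R) (w : S) k : (e k = 1 \/ e k = -1) ->
  `|sign_seq e w k| = `|w k|.
Proof. by rewrite /sign_seq normrZ => -[] ->; rewrite ?normrN normr1 mul1r. Qed.

Lemma Nrec_sign (e : nat -> R) (w : S) : (forall k, e k = 1 \/ e k = -1) ->
  Nrec (sign_seq e w) = Nrec w.
Proof. by move=> he; apply: funext => k; apply: Nrec_ext => i _; exact: norm_sign. Qed.

Lemma Zrec_sign (e : nat -> R) (w : S) : (forall k, e k = 1 \/ e k = -1) ->
  Zrec (sign_seq e w) = Zrec w.
Proof. by move=> he; apply: funext => k; apply: Zrec_ext => i _; exact: norm_sign. Qed.

End Aux4.

Theorem proposition1p4 (R : realType) (Xs : nat -> completeNormedModType R) :
  schauder_decomposition (@Xnorm R Xs) /\ monotone_decomposition (@Xnorm R Xs) /\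
  unconditional1_decomposition (@Xnorm R Xs) /\
  schauder_decomposition (@Znorm R Xs) /\ monotone_decomposition (@Znorm R Xs) /\
  unconditional1_decomposition (@Znorm R Xs) /\
  (forall (x : seqs Xs) (e : nat -> R) (m : nat),
      (forall k, e k = 1 \/ e k = -1) ->
      Nrec (sign_seq e x) m = Nrec x m /\ Nrec x m <= Nrec x m.+1 /\
      Zrec (sign_seq e x) m = Zrec x m /\ Zrec x m <= Zrec x m.+1).
Proof.
split; [|split; [|split; [|split; [|split; [|split]]]]].
- move=> w hw; split; first exact: Xnorm_tail_cvg.
  move=> v; apply: uniq_gen => // y j hy; exact: Xnorm_half.
- by move=> w _ m; rewrite !Xnorm_trunc Nrec_mono1.
- move=> w e hw he; split.
    by rewrite /Defs.summable Zrec_sign.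
  by rewrite /Xnorm Nrec_sign.
- move=> w hw; split; first exact: Znorm_tail_cvg.
  move=> v; apply: uniq_gen => // y j hy; exact: Znorm_half.
- by move=> w _ m; rewrite !Znorm_trunc Zrec_mono1.
- move=> w e hw he; split.
    by rewrite /Defs.summable Zrec_sign.
  by rewrite /Znorm Zrec_sign.
- move=> x e m he.
  by rewrite Nrec_sign // Zrec_sign // Nrec_mono1 Zrec_mono1.
Qed.
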